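(* The only LW-surfaces of Riemann-type are: (1) the surfaces of revolution; (2) the classical Riemann examples of minimal surfaces.
   Context: A surface $S$ in Euclidean space $\mathbb{R}^3$ with principal curvatures $\kappa_1,\kappa_2$ is called a linear Weingarten surface (LW-surface) if $\kappa_1=m\,\kappa_2+n$ for real constants $m,n$, where $m\neq 0$ is assumed (so that no principal curvature vanishes identically) and the umbilical case ($\kappa_1=\kappa_2$) is excluded. A cyclic surface is a surface determined by a smooth uniparametric family of pieces of circles; it is of Riemann-type if the planes containing the circles of the foliation are parallel. Locally such a surface can be written as $X(u,v)=(a(u),b(u),u)+r(u)(\cos v,\sin v,0)$ with smooth $a,b$ and radius $r>0$; it is a surface of revolution iff $a,b$ are constant. The classical Riemann examples are the minimal surfaces ($(m,n)=(-1,0)$) of this form with $a'=\lambda r^2$, $b'=\mu r^2$ for constants $\lambda,\mu$ with $\lambda^2+\mu^2\neq 0$, and $1+(\lambda^2+\mu^2)r^4+r'^2-r r''=0$ (the case $\lambda^2+\mu^2=0$ giving the catenoid). *)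

(* Defs.v *)
From Stdlib Require Import Reals.
From Coquelicot Require Import Coquelicot.
Open Scope R_scope.

Definition vec3 : Type := (R * R * R)%type.
Definition v1 (p : vec3) : R := fst (fst p).
Definition v2 (p : vec3) : R := snd (fst p).
Definition v3 (p : vec3) : R := snd p.
Definition dot (p q : vec3) : R := v1 p * v1 q + v2 p * v2 q + v3 p * v3 q.
Definition cross (p q : vec3) : vec3 :=
  (v2 p * v3 q - v3 p * v2 q, v3 p * v1 q - v1 p * v3 q, v1 p * v2 q - v2 p * v1 q).

Definition surface : Type := R -> R -> vec3.
Definition Xu (X : surface) : surface := fun u v =>
  (Derive (fun t => v1 (X t v)) u, Derive (fun t => v2 (X t v)) u,
   Derive (fun t => v3 (X t v)) u).
Definition Xv (X : surface) : surface := fun u v =>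
  (Derive (fun t => v1 (X u t)) v, Derive (fun t => v2 (X u t)) v,
   Derive (fun t => v3 (X u t)) v).

Definition fE (X : surface) u v := dot (Xu X u v) (Xu X u v).
Definition fF (X : surface) u v := dot (Xu X u v) (Xv X u v).
Definition fG (X : surface) u v := dot (Xv X u v) (Xv X u v).
Definition fW2 (X : surface) u v := fE X u v * fG X u v - fF X u v ^ 2.

Definition unit_normal (X : surface) u v : vec3 :=
  let c := cross (Xu X u v) (Xv X u v) in
  let l := sqrt (dot c c) in (v1 c / l, v2 c / l, v3 c / l).
Definition se (X : surface) u v := dot (Xu (Xu X) u v) (unit_normal X u v).
Definition sf (X : surface) u v := dot (Xv (Xu X) u v) (unit_normal X u v).
Definition sg (X : surface) u v := dot (Xv (Xv X) u v) (unit_normal X u v).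

(** Gauss and mean curvature, and the two principal curvatures
    kappa_plus >= kappa_minus (the roots of k^2 - 2 H k + K = 0). *)
Definition gaussK (X : surface) u v :=
  (se X u v * sg X u v - sf X u v ^ 2) / fW2 X u v.
Definition meanH (X : surface) u v :=
  (se X u v * fG X u v - 2 * sf X u v * fF X u v + sg X u v * fE X u v)
  / (2 * fW2 X u v).
Definition kappa_plus (X : surface) u v :=
  meanH X u v + sqrt (meanH X u v ^ 2 - gaussK X u v).
Definition kappa_minus (X : surface) u v :=
  meanH X u v - sqrt (meanH X u v ^ 2 - gaussK X u v).

(** Cyclic surface of Riemann type:
    X(u,v) = (a(u), b(u), u) + r(u) (cos v, sin v, 0). *)
Definition riemann_cyclic (a b r : R -> R) : surface := fun u v =>
  (a u + r u * cos v, b u + r u * sin v, u).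

Definition smooth_on (f : R -> R) (u0 u1 : R) : Prop :=
  forall (k : nat) (x : R), u0 < x < u1 -> ex_derive_n f k x.

(** Linear Weingarten condition on the domain D of the parameters:
    kappa_1 = m kappa_2 + n with m <> 0, for some labelling
    (kappa_1, kappa_2) of the two principal curvatures, the labelling being
    the same on the whole (connected) domain. *)
Definition is_LW (X : surface) (D : R -> R -> Prop) : Prop :=
  exists m n : R, m <> 0 /\
   ((forall u v, D u v -> kappa_plus X u v = m * kappa_minus X u v + n) \/
    (forall u v, D u v -> kappa_minus X u v = m * kappa_plus X u v + n)).

Definition umbilic_free (X : surface) (D : R -> R -> Prop) : Prop :=
  forall u v, D u v -> kappa_plus X u v <> kappa_minus X u v.

(* Main.v *)
Require Import Defs.
From Stdlib Require Import Reals Lra Lia Nsatz Classical.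
From Coquelicot Require Import Coquelicot.
Open Scope R_scope.


Definition hm (a b : nat -> R) (k : nat) (v : R) :=
  a k * cos (INR k * v) + b k * sin (INR k * v).
Definition tp (N : nat) (a b : nat -> R) (v : R) := sum_f_R0 (fun k => hm a b k v) N.
Definition trig (N : nat) (A B : R) (f : R -> R) :=
  exists a b : nat -> R, a N = A /\ b N = B /\ forall v, f v = tp N a b v.
Definition trigl (N : nat) (f : R -> R) := exists A B, trig N A B f.

Lemma T_ext N A B f g : (forall v, f v = g v) -> trig N A B f -> trig N A B g.
Proof. intros H [a [b [H1 [H2 H3]]]]. exists a, b; repeat split; auto.
intro v; rewrite <- H; auto. Qed.

Lemma tp_S N a b v : tp (S N) a b v = tp N a b v + hm a b (S N) v.
Proof. reflexivity. Qed.

Lemma sum_zero N (f : nat -> R) : (forall i, (i <= N)%nat -> f i = 0) -> sum_f_R0 f N = 0.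
Proof. intro H. rewrite (sum_eq f (fun _ => 0)); auto. rewrite sum_cte; ring. Qed.

Lemma T_harm N A B : trig N A B (fun v => A * cos (INR N * v) + B * sin (INR N * v)).
Proof.
exists (fun k => if Nat.eqb k N then A else 0), (fun k => if Nat.eqb k N then B else 0).
rewrite Nat.eqb_refl. repeat split. intro v. destruct N as [|N].
- unfold tp. simpl. unfold hm. simpl. ring.
- rewrite tp_S. unfold tp. rewrite sum_zero.
  + unfold hm. rewrite Nat.eqb_refl. ring.
  + intros i Hi. unfold hm. replace (Nat.eqb i (S N)) with false. ring.
    symmetry. apply Nat.eqb_neq. lia.
Qed.

Lemma T_const c : trig 0 c 0 (fun _ => c).
Proof. eapply T_ext; [|apply (T_harm 0 c 0)]. intro v; simpl.
rewrite Rmult_0_l, cos_0, sin_0; ring. Qed.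

Lemma T_lift1 N A B f : trig N A B f -> trig (S N) 0 0 f.
Proof. intros [a [b [H1 [H2 H3]]]].
exists (fun k => if Nat.eqb k (S N) then 0 else a k), (fun k => if Nat.eqb k (S N) then 0 else b k).
rewrite Nat.eqb_refl. repeat split. intro v. rewrite H3, !tp_S.
replace (hm (fun k => if Nat.eqb k (S N) then 0 else a k) (fun k => if Nat.eqb k (S N) then 0 else b k) (S N) v) with 0
 by (unfold hm; rewrite Nat.eqb_refl; ring).
rewrite Rplus_0_r. unfold tp. apply sum_eq. intros i Hi. unfold hm. replace (Nat.eqb i (S N)) with false. auto.
symmetry. apply Nat.eqb_neq. lia. Qed.

Lemma T_lift N M A B f : trig N A B f -> (N < M)%nat -> trig M 0 0 f.
Proof. intros H HM. induction HM.
- eapply T_lift1; eauto.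
- eapply T_lift1; eauto. Qed.

Lemma Tl_lift N M f : trigl N f -> (N < M)%nat -> trig M 0 0 f.
Proof. intros [A [B H]] HM. eapply T_lift; eauto. Qed.

Lemma Tl_le N M f : trigl N f -> (N <= M)%nat -> trigl M f.
Proof. intros H HM. destruct (Nat.eq_dec N M). subst; auto.
exists 0, 0. eapply Tl_lift; eauto. lia. Qed.

Lemma T_add N A B C D f g : trig N A B f -> trig N C D g ->
  trig N (A + C) (B + D) (fun v => f v + g v).
Proof. intros [a [b [H1 [H2 H3]]]] [c [d [H4 [H5 H6]]]].
exists (fun k => a k + c k), (fun k => b k + d k). subst. repeat split.
intro v. rewrite H3, H6. unfold tp. rewrite <- sum_plus. apply sum_eq.
intros; unfold hm; ring. Qed.

Lemma T_scal N A B x f : trig N A B f -> trig N (x * A) (x * B) (fun v => x * f v).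
Proof. intros [a [b [H1 [H2 H3]]]].
exists (fun k => x * a k), (fun k => x * b k). subst. repeat split.
intro v. rewrite H3. unfold tp. rewrite scal_sum. apply sum_eq.
intros; unfold hm; ring. Qed.

Lemma Tl_add N f g : trigl N f -> trigl N g -> trigl N (fun v => f v + g v).
Proof. intros [A [B H]] [C [D H']]. exists (A + C), (B + D). apply T_add; auto. Qed.

Lemma Tl_scal N x f : trigl N f -> trigl N (fun v => x * f v).
Proof. intros [A [B H]]. exists (x * A), (x * B). apply T_scal; auto. Qed.

Lemma Tl_ext N f g : (forall v, f v = g v) -> trigl N f -> trigl N g.
Proof. intros H [A [B H']]. exists A, B. eapply T_ext; eauto. Qed.

Lemma T_decomp N A B f : trig (S N) A B f -> exists g, trigl N g /\
  forall v, f v = g v + (A * cos (INR (S N) * v) + B * sin (INR (S N) * v)).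
Proof. intros [a [b [H1 [H2 H3]]]]. exists (tp N a b). split.
- exists (a N), (b N), a, b. auto.
- intro v. rewrite H3, tp_S. unfold hm. subst. auto. Qed.

Lemma T_zero_deg A B f : trig 0 A B f -> forall v, f v = A.
Proof. intros [a [b [H1 [H2 H3]]]] v. rewrite H3. unfold tp, hm. simpl.
rewrite Rmult_0_l, cos_0, sin_0. subst. ring. Qed.

Definition harm (j : nat) (x y : R) (v : R) := x * cos (INR j * v) + y * sin (INR j * v).

Lemma prod_id A B x y x' y' :
  (x * cos A + y * sin A) * (x' * cos B + y' * sin B) =
  ((x*x' - y*y')/2 * cos (A + B) + (x*y' + y*x')/2 * sin (A + B)) +
  ((x*x' + y*y')/2 * cos (A - B) + (y*x' - x*y')/2 * sin (A - B)).
Proof. rewrite cos_plus, sin_plus, cos_minus, sin_minus. field. Qed.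

Lemma HH_top j k x y x' y' : (1 <= j)%nat -> (1 <= k)%nat ->
  trig (j + k) ((x*x' - y*y')/2) ((x*y' + y*x')/2) (fun v => harm j x y v * harm k x' y' v).
Proof. intros Hj Hk.
assert (Hlow : trig (j + k) 0 0 (fun v => (x*x' + y*y')/2 * cos (INR j * v - INR k * v) + (y*x' - x*y')/2 * sin (INR j * v - INR k * v))).
{ destruct (Compare_dec.le_lt_dec k j) as [Hkj|Hjk].
  - apply (T_lift (j - k) _ ((x*x' + y*y')/2) ((y*x' - x*y')/2)); [|lia].
    eapply T_ext; [|apply (T_harm (j-k) ((x*x' + y*y')/2) ((y*x' - x*y')/2))].
    intro v. rewrite minus_INR by lia. f_equal; f_equal; f_equal; ring.
  - apply (T_lift (k - j) _ ((x*x' + y*y')/2) (-((y*x' - x*y')/2))); [|lia].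
    eapply T_ext; [|apply (T_harm (k-j) ((x*x' + y*y')/2) (-((y*x' - x*y')/2)))].
    intro v. rewrite minus_INR by lia.
    replace (INR j * v - INR k * v) with (- ((INR k - INR j) * v)) by ring.
    rewrite cos_neg, sin_neg. ring. }
pose proof (T_add _ _ _ _ _ _ _ (T_harm (j+k) ((x*x' - y*y')/2) ((x*y' + y*x')/2)) Hlow) as H.
rewrite !Rplus_0_r in H. eapply T_ext; [|exact H].
intro v. unfold harm. rewrite prod_id. rewrite plus_INR. f_equal. f_equal; f_equal; f_equal; ring.
Qed.

Lemma HH j k x y x' y' : trigl (j + k) (fun v => harm j x y v * harm k x' y' v).
Proof.
destruct j as [|j].
- simpl. exists (x * x'), (x * y'). eapply T_ext; [|apply (T_harm k (x*x') (x*y'))].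
  intro v. unfold harm. simpl. rewrite Rmult_0_l, cos_0, sin_0. ring.
- destruct k as [|k].
  + rewrite Nat.add_0_r. exists (x * x'), (y * x'). eapply T_ext; [|apply (T_harm (S j) (x*x') (y*x'))].
    intro v. unfold harm. simpl (INR 0). rewrite Rmult_0_l, cos_0, sin_0. ring.
  + eexists; eexists; apply HH_top; lia.
Qed.

Lemma T_mul_l j x y M g : trigl M g -> trigl (j + M) (fun v => harm j x y v * g v).
Proof. revert g. induction M as [|M IH]; intros g Hg.
- destruct Hg as [A [B Hg]]. pose proof (T_zero_deg _ _ _ Hg) as E.
  eapply Tl_ext; [|apply (HH j 0 x y A 0)]. intro v. rewrite E. unfold harm. simpl (INR 0).
  rewrite Rmult_0_l, cos_0, sin_0. ring.
- destruct Hg as [A [B Hg]]. destruct (T_decomp _ _ _ _ Hg) as [g' [Hg' E]].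
  eapply Tl_ext; [|apply Tl_add; [apply (Tl_le _ _ _ (IH g' Hg')); lia | apply (HH j (S M) x y A B)]].
  intro v. rewrite E. unfold harm. ring.
Qed.

Lemma T_mul N M f g : trigl N f -> trigl M g -> trigl (N + M) (fun v => f v * g v).
Proof. revert f. induction N as [|N IH]; intros f Hf Hg.
- destruct Hf as [A [B Hf]]. pose proof (T_zero_deg _ _ _ Hf) as E.
  eapply Tl_ext; [|apply (Tl_scal _ A _ Hg)]. intro v. rewrite E. auto.
- destruct Hf as [A [B Hf]]. destruct (T_decomp _ _ _ _ Hf) as [f' [Hf' E]].
  eapply Tl_ext; [|apply Tl_add; [apply (Tl_le _ _ _ (IH f' Hf' Hg)); lia | apply (T_mul_l (S N) A B M g Hg)]].
  intro v. rewrite E. unfold harm. ring.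
Qed.

Definition pm (A B C D : R) := ((A*C - B*D)/2, (A*D + B*C)/2).

Lemma T_mul_top N M A B C D f g : (1 <= N)%nat -> (1 <= M)%nat ->
  trig N A B f -> trig M C D g ->
  trig (N + M) ((A*C - B*D)/2) ((A*D + B*C)/2) (fun v => f v * g v).
Proof. intros HN HM Hf Hg.
destruct N as [|N]; [lia|]. destruct M as [|M]; [lia|].
destruct (T_decomp _ _ _ _ Hf) as [f' [Hf' Ef]].
destruct (T_decomp _ _ _ _ Hg) as [g' [Hg' Eg]].
assert (H1 : trig (S N + S M) 0 0 (fun v => f' v * g v)).
{ apply (Tl_lift (N + S M)); [|lia]. apply T_mul; auto. exists C, D; auto. }
assert (H2 : trig (S N + S M) 0 0 (fun v => harm (S N) A B v * g' v)).
{ apply (Tl_lift (S N + M)); [|lia]. apply T_mul_l; auto. }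
pose proof (HH_top (S N) (S M) A B C D ltac:(lia) ltac:(lia)) as H3.
pose proof (T_add _ _ _ _ _ _ _ (T_add _ _ _ _ _ _ _ H1 H2) H3) as H.
rewrite !Rplus_0_l in H. eapply T_ext; [|exact H].
intro v. rewrite Ef, Eg. unfold harm. ring.
Qed.

Lemma D_hm a b k v : is_derive (fun v => hm a b k v) v (hm (fun k => INR k * b k) (fun k => - INR k * a k) k v).
Proof. unfold hm. auto_derive; auto. ring. Qed.

Lemma D_tp N a b v : is_derive (tp N a b) v (tp N (fun k => INR k * b k) (fun k => - INR k * a k) v).
Proof. induction N as [|N IH].
- unfold tp; simpl. apply D_hm.
- eapply is_derive_ext. intro t. symmetry. apply tp_S.
  rewrite tp_S. apply (is_derive_plus (tp N a b) (fun v => hm a b (S N) v)). apply IH. apply D_hm.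
Qed.

Lemma loc_zero v0 v1 f l v : (forall t, v0 < t < v1 -> f t = 0) -> v0 < v < v1 ->
  is_derive f v l -> l = 0.
Proof. intros H Hv Hd.
assert (Hl : locally v (fun t => 0 = f t)).
{ assert (Ho : open (fun t => v0 < t /\ t < v1)) by (apply open_and; [apply open_gt | apply open_lt]).
  specialize (Ho v Hv). eapply filter_imp; [|exact Ho]. intros t Ht. symmetry; apply H; auto. }
assert (H0 : is_derive (fun _ : R => 0) v 0) by (auto_derive; auto).
pose proof (is_derive_ext_loc _ _ _ _ Hl H0) as H1.
pose proof (is_derive_unique _ _ _ H1). pose proof (is_derive_unique _ _ _ Hd). congruence.
Qed.

Lemma vanish v0 v1 : v0 < v1 -> forall N a b, (forall v, v0 < v < v1 -> tp N a b v = 0) ->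
  forall k, (k <= N)%nat -> a k = 0 /\ ((k <> 0)%nat -> b k = 0).
Proof. intros H01 N. induction N as [|N IH]; intros a b H k Hk.
- assert (k = 0%nat) by lia. subst. split; [|lia].
  assert (Hm : v0 < (v0+v1)/2 < v1) by lra. specialize (H _ Hm).
  unfold tp, hm in H; simpl in H. rewrite Rmult_0_l, cos_0, sin_0 in H. lra.
- set (a1 := fun k => INR k * b k). set (b1 := fun k => - INR k * a k).
  assert (H1 : forall v, v0 < v < v1 -> tp (S N) a1 b1 v = 0).
  { intros v Hv. eapply loc_zero; [exact H| exact Hv|]. apply D_tp. }
  assert (H2 : forall v, v0 < v < v1 -> tp (S N) (fun k => INR k * b1 k) (fun k => - INR k * a1 k) v = 0).
  { intros v Hv. eapply loc_zero; [exact H1| exact Hv|]. apply D_tp. }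
  set (c := fun k => (INR (S N) ^ 2 - INR k ^ 2) * a k).
  set (d := fun k => (INR (S N) ^ 2 - INR k ^ 2) * b k).
  assert (H3 : forall v, v0 < v < v1 -> tp N c d v = 0).
  { intros v Hv. transitivity (INR (S N) ^ 2 * tp (S N) a b v + tp (S N) (fun k => INR k * b1 k) (fun k => - INR k * a1 k) v).
    - rewrite !tp_S.
      assert (E : INR (S N) ^ 2 * hm a b (S N) v + hm (fun k => INR k * b1 k) (fun k => - INR k * a1 k) (S N) v = 0)
        by (unfold hm, a1, b1; ring).
      assert (E' : tp N c d v = INR (S N) ^ 2 * tp N a b v + tp N (fun k => INR k * b1 k) (fun k => - INR k * a1 k) v).
      { unfold tp. rewrite scal_sum, <- sum_plus. apply sum_eq. intros i Hi. unfold hm, c, d, a1, b1. ring. }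
      rewrite E'. lra.
    - rewrite H, H2; auto. ring. }
  pose proof (IH c d H3) as IHc.
  assert (Hlow : forall i, (i <= N)%nat -> a i = 0 /\ ((i <> 0)%nat -> b i = 0)).
  { intros i Hi. destruct (IHc i Hi) as [Hc Hd].
    assert (Hne : INR (S N) ^ 2 - INR i ^ 2 <> 0).
    { assert (INR i < INR (S N)) by (apply lt_INR; lia). pose proof (pos_INR i). nra. }
    unfold c, d in *. split.
    - apply (Rmult_eq_reg_l _ _ _ ltac:(rewrite Rmult_0_r; exact Hc) Hne) || (apply Rmult_integral in Hc; destruct Hc; [contradiction|auto]).
    - intro Hi0. specialize (Hd Hi0). apply Rmult_integral in Hd; destruct Hd; [contradiction|auto]. }
  assert (HlowS : forall v, tp N a b v = 0).
  { intro v. unfold tp. apply sum_zero. intros i Hi. destruct (Hlow i Hi) as [Ha Hb]. unfold hm.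
    rewrite Ha. destruct (Nat.eq_dec i 0) as [->|Hi0]. simpl (INR 0). rewrite (Rmult_0_l v), sin_0. ring.
    rewrite Hb; auto. ring. }
  assert (HlowS1 : forall v, tp N a1 b1 v = 0).
  { intro v. unfold tp. apply sum_zero. intros i Hi. destruct (Hlow i Hi) as [Ha Hb]. unfold hm, a1, b1.
    rewrite Ha. destruct (Nat.eq_dec i 0) as [->|Hi0]. simpl. ring.
    rewrite Hb; auto. ring. }
  assert (Hm : v0 < (v0+v1)/2 < v1) by lra.
  pose proof (H _ Hm) as E1. pose proof (H1 _ Hm) as E2.
  rewrite tp_S, HlowS in E1. rewrite tp_S, HlowS1 in E2. unfold hm, a1, b1 in E1, E2.
  set (t := INR (S N) * ((v0 + v1) / 2)) in *.
  assert (HN : INR (S N) <> 0) by (apply not_0_INR; lia).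
  assert (E3 : b (S N) * cos t - a (S N) * sin t = 0).
  { apply (Rmult_eq_reg_l (INR (S N))); auto. rewrite Rmult_0_r. rewrite <- E2. ring. }
  pose proof (sin2_cos2 t) as Hsc. unfold Rsqr in Hsc.
  assert (Hab : a (S N) ^ 2 + b (S N) ^ 2 = 0).
  { assert (E1' : a (S N) * cos t + b (S N) * sin t = 0) by lra.
    assert (Eid : (a (S N) * cos t + b (S N) * sin t) ^ 2 + (b (S N) * cos t - a (S N) * sin t) ^ 2
       = (a (S N) ^ 2 + b (S N) ^ 2) * (sin t * sin t + cos t * cos t)) by ring.
    rewrite Hsc, E1', E3 in Eid. lra. }
  destruct (Nat.eq_dec k (S N)) as [->|Hk'].
  + split; [nra | intros; nra].
  + apply Hlow; lia.
Qed.

Lemma vanish_top v0 v1 N A B f : v0 < v1 -> (1 <= N)%nat -> trig N A B f ->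
  (forall v, v0 < v < v1 -> f v = 0) -> A = 0 /\ B = 0.
Proof. intros H01 HN [a [b [Ha [Hb Hf]]]] H.
destruct (vanish v0 v1 H01 N a b (fun v Hv => eq_trans (eq_sym (Hf v)) (H v Hv)) N (le_n N)) as [H1 H2].
subst; split; auto. apply H2; lia. Qed.

Lemma trig1 x y z : trig 1 x y (fun v => z + x * cos v + y * sin v).
Proof.
pose proof (T_add _ _ _ _ _ _ _ (T_lift1 _ _ _ _ (T_const z)) (T_harm 1 x y)) as H.
rewrite !Rplus_0_l in H. eapply T_ext; [|exact H]. intro v. simpl. rewrite !Rmult_1_l. ring. Qed.

Lemma pm_nz A B C D : A^2 + B^2 > 0 -> C^2 + D^2 > 0 ->
  ((A*C - B*D)/2)^2 + ((A*D + B*C)/2)^2 > 0.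
Proof. intros H1 H2.
replace (((A*C - B*D)/2)^2 + ((A*D + B*C)/2)^2) with ((A^2+B^2)*(C^2+D^2)/4) by field.
apply Rmult_gt_0_compat; [apply Rmult_gt_0_compat|]; lra. Qed.

Lemma pm_sq_zero A B : (A*A - B*B)/2 = 0 -> (A*B + B*A)/2 = 0 -> A = 0 /\ B = 0.
Proof. intros H1 H2. assert (A*B = 0) by lra. assert (A*A = B*B) by lra.
destruct (Rmult_integral _ _ H) as [->| ->]; split; nra. Qed.

Lemma sq0 x : x ^ 2 = 0 -> x = 0.
Proof. intro H. nra. Qed.

Section Core.
Variables (R0 p q rho al be ga m n : R).

Definition cP v := rho + p * cos v + q * sin v.
Definition cT v := 1 + cP v ^ 2.
Definition cw v := sqrt (cT v).
Definition cL v := ga + al * cos v + be * sin v.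
Definition cD v := (1 + p^2 + q^2 + rho^2 - R0*ga) + (2*rho*p - R0*al) * cos v + (2*rho*q - R0*be) * sin v.
Definition star v := m * cD v ^ 2 + (1+m)^2 * R0 * cL v * cT v + n * (1-m) * R0 * cD v * cT v * cw v
   - n^2 * R0^2 * cT v ^ 3.

Lemma cT_pos v : 0 < cT v.
Proof. unfold cT. pose proof (pow2_ge_0 (cP v)). lra. Qed.

Lemma cw_sq v : cw v ^ 2 = cT v.
Proof. unfold cw. rewrite <- Rsqr_pow2. apply Rsqr_sqrt. pose proof (cT_pos v); lra. Qed.

Lemma trig_T : trig 2 ((p*p - q*q)/2) ((p*q + q*p)/2) cT.
Proof.
pose proof (T_mul_top 1 1 _ _ _ _ _ _ (le_n 1) (le_n 1) (trig1 p q rho) (trig1 p q rho)) as H.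
pose proof (T_add _ _ _ _ _ _ _ (T_lift _ 2 _ _ _ (T_const 1) ltac:(lia)) H) as H'.
rewrite !Rplus_0_l in H'. eapply T_ext; [|exact H']. intro v. unfold cT, cP. simpl. ring. Qed.

Hypothesis Hpq : p^2 + q^2 <> 0.

Lemma topT_nz : ((p*p - q*q)/2)^2 + ((p*q + q*p)/2)^2 > 0.
Proof. replace (((p*p - q*q)/2)^2 + ((p*q + q*p)/2)^2) with ((p^2+q^2)^2/4) by field.
assert (0 < (p^2+q^2)^2) by (apply pow_lt; pose proof (pow2_ge_0 p); pose proof (pow2_ge_0 q); lra).
lra. Qed.

Variables (v0 v1 : R).
Hypothesis H01 : v0 < v1.
Hypothesis HR0 : 0 < R0.
Hypothesis Hstar : forall v, v0 < v < v1 -> star v = 0.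

Lemma claimA : n = 0.
Proof.
set (tA := (p*p - q*q)/2). set (tB := (p*q + q*p)/2).
pose proof trig_T as HT. fold tA tB in HT.
pose proof (T_mul_top 2 2 _ _ _ _ _ _ ltac:(lia) ltac:(lia) HT HT) as HT2. simpl (2+2)%nat in HT2.
pose proof (T_mul_top 4 2 _ _ _ _ _ _ ltac:(lia) ltac:(lia) HT2 HT) as HT3. simpl (4+2)%nat in HT3.
set (t2A := (tA * tA - tB * tB) / 2) in *. set (t2B := (tA * tB + tB * tA) / 2) in *.
set (t3A := (t2A * tA - t2B * tB) / 2) in *. set (t3B := (t2A * tB + t2B * tA) / 2) in *.
assert (Hnz : t3A^2 + t3B^2 > 0).
{ unfold t3A, t3B. apply pm_nz; [unfold t2A, t2B; apply pm_nz|]; apply topT_nz. }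
assert (HD : trigl 1 cD) by (eexists; eexists; apply trig1).
assert (HL : trigl 1 cL) by (eexists; eexists; apply trig1).
assert (HD2 : trigl 2 (fun v => cD v * cD v)) by (apply (T_mul 1 1); auto).
assert (HLT : trigl 3 (fun v => cL v * cT v)) by (apply (T_mul 1 2); auto; eexists; eexists; eauto).
set (Z := fun v => m * (cD v * cD v) + ((1+m)^2 * R0) * (cL v * cT v) + (- (n^2 * R0^2)) * (cT v * cT v * cT v)).
assert (HZ : trig 6 (- (n^2*R0^2) * t3A) (- (n^2*R0^2) * t3B) Z).
{ pose proof (T_add _ _ _ _ _ _ _ (T_scal _ _ _ m _ (Tl_lift 2 6 _ HD2 ltac:(lia)))
      (T_scal _ _ _ ((1+m)^2 * R0) _ (Tl_lift 3 6 _ HLT ltac:(lia)))) as H1.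
  pose proof (T_add _ _ _ _ _ _ _ H1 (T_scal _ _ _ (- (n^2*R0^2)) _ HT3)) as H2.
  eapply T_ext; [|rewrite !Rmult_0_r, !Rplus_0_l in H2; exact H2]. intro v. unfold Z. ring. }
set (zA := - (n^2*R0^2) * t3A) in *. set (zB := - (n^2*R0^2) * t3B) in *.
pose proof (T_mul_top 6 6 _ _ _ _ _ _ ltac:(lia) ltac:(lia) HZ HZ) as HZ2. simpl (6+6)%nat in HZ2.
assert (HRHS : trigl 8 (fun v => (cD v * cD v) * (cT v * cT v * cT v))).
{ apply (T_mul 2 6); auto. eexists; eexists; eauto. }
pose proof (T_add _ _ _ _ _ _ _ HZ2 (T_scal _ _ _ (- (n^2*(1-m)^2*R0^2)) _ (Tl_lift 8 12 _ HRHS ltac:(lia)))) as Hf.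
rewrite !Rmult_0_r, !Rplus_0_r in Hf.
assert (Hvan : forall v, v0 < v < v1 -> Z v * Z v + - (n^2*(1-m)^2*R0^2) * ((cD v * cD v) * (cT v * cT v * cT v)) = 0).
{ intros v Hv. pose proof (Hstar v Hv) as E. unfold star in E.
  assert (EZ : Z v = - (n * (1-m) * R0 * cD v * cT v * cw v)) by (unfold Z; lra).
  rewrite EZ. pose proof (cw_sq v) as Ew.
  replace (- (n * (1 - m) * R0 * cD v * cT v * cw v) * - (n * (1 - m) * R0 * cD v * cT v * cw v))
    with (n^2*(1-m)^2*R0^2 * cD v ^2 * cT v ^2 * cw v ^ 2) by ring. rewrite Ew. ring. }
destruct (vanish_top v0 v1 12 _ _ _ H01 ltac:(lia) Hf Hvan) as [E1 E2].
destruct (pm_sq_zero _ _ E1 E2) as [Ez1 Ez2].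
unfold zA, zB in *.
assert (Hn : n^2 * R0^2 = 0).
{ assert ((n^2*R0^2)^2 * (t3A^2 + t3B^2) = 0).
  { replace ((n^2*R0^2)^2 * (t3A^2 + t3B^2)) with ((- (n ^ 2 * R0 ^ 2) * t3A)^2 + (- (n ^ 2 * R0 ^ 2) * t3B)^2) by ring.
    rewrite Ez1, Ez2. ring. }
  apply Rmult_integral in H. destruct H as [H|H]; [|lra].
  apply sq0; auto. }
apply Rmult_integral in Hn. destruct Hn as [Hn|Hn].
- apply sq0; auto.
- apply sq0 in Hn. lra.
Qed.

Hypothesis Hm0 : m <> 0.
Hypothesis Humb : forall v, v0 < v < v1 -> ~ (cD v = 0 /\ cL v = 0).

Lemma coef2 k d0 d1 d2 v :
  k * cT v + m * ((d0 + d1 * cos v + d2 * sin v) * (d0 + d1 * cos v + d2 * sin v)) =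
  tp 2 (fun i => match i with 0 => k*(1+rho^2+(p^2+q^2)/2) + m*(d0^2 + (d1^2+d2^2)/2)
                   | 1 => 2*k*rho*p + 2*m*d0*d1 | _ => k*(p^2-q^2)/2 + m*(d1^2-d2^2)/2 end)
       (fun i => match i with 0 => 0 | 1 => 2*k*rho*q + 2*m*d0*d2 | _ => k*p*q + m*d1*d2 end) v.
Proof.
unfold tp, hm, cT, cP. simpl sum_f_R0. simpl INR.
replace ((1+1) * v) with (2 * v) by ring. rewrite cos_2a, sin_2a.
rewrite Rmult_0_l, cos_0, sin_0, Rmult_1_l.
pose proof (sin2_cos2 v) as H. unfold Rsqr in H.
match goal with |- ?L = ?R => assert (E : L - R = (k*(p^2+q^2) + m*(d1^2+d2^2))/2 * (sin v * sin v + cos v * cos v - 1)) by field end.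
rewrite H in E. lra.
Qed.

Lemma claimB : m = -1.
Proof.
pose proof claimA as Hn.
destruct (Req_dec m (-1)) as [Hm|Hm]; auto. exfalso.
assert (Hk0 : (1+m)^2 * R0 <> 0).
{ apply Rmult_integral_contrapositive; split; [apply pow_nonzero; lra | lra]. }
set (tA := (p*p - q*q)/2). set (tB := (p*q + q*p)/2).
pose proof trig_T as HT. fold tA tB in HT.
assert (HD : trigl 1 cD) by (eexists; eexists; apply trig1).
assert (HD2 : trigl 2 (fun v => cD v * cD v)) by (apply (T_mul 1 1); auto).
pose proof (T_mul_top 1 2 _ _ _ _ _ _ ltac:(lia) ltac:(lia) (trig1 al be ga) HT) as HLT.
simpl (1+2)%nat in HLT.
pose proof (T_add _ _ _ _ _ _ _ (T_scal _ _ _ m _ (Tl_lift 2 3 _ HD2 ltac:(lia)))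
      (T_scal _ _ _ ((1+m)^2 * R0) _ HLT)) as Hg.
rewrite !Rmult_0_r, !Rplus_0_l in Hg.
assert (Hvan : forall v, v0 < v < v1 -> m * (cD v * cD v) + (1+m)^2 * R0 * ((ga + al * cos v + be * sin v) * cT v) = 0).
{ intros v Hv. pose proof (Hstar v Hv) as E. unfold star in E. rewrite Hn in E. unfold cL in E.
  rewrite <- E. ring. }
destruct (vanish_top v0 v1 3 _ _ _ H01 ltac:(lia) Hg Hvan) as [E1 E2].
apply Rmult_integral in E1. destruct E1 as [E1|E1]; [contradiction|].
apply Rmult_integral in E2. destruct E2 as [E2|E2]; [contradiction|].
assert (Hab : al = 0 /\ be = 0).
{ pose proof topT_nz as Hnz. fold tA tB in Hnz.
  assert (Hp : (al^2+be^2)*(tA^2+tB^2) = 0).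
  { replace ((al^2+be^2)*(tA^2+tB^2)) with (4 * (((al*tA - be*tB)/2)^2 + ((al*tB + be*tA)/2)^2)) by field.
    rewrite E1, E2. ring. }
  apply Rmult_integral in Hp. destruct Hp as [Hp|Hp]; [|lra]. split; nra. }
destruct Hab as [Hal Hbe].
set (k := (1+m)^2 * R0 * ga). set (d0 := 1 + p^2 + q^2 + rho^2 - R0*ga).
set (d1 := 2*rho*p). set (d2 := 2*rho*q).
assert (Hv2 : forall v, v0 < v < v1 -> tp 2 (fun i => match i with 0 => k*(1+rho^2+(p^2+q^2)/2) + m*(d0^2 + (d1^2+d2^2)/2)
                   | 1 => 2*k*rho*p + 2*m*d0*d1 | _ => k*(p^2-q^2)/2 + m*(d1^2-d2^2)/2 end)
       (fun i => match i with 0 => 0 | 1 => 2*k*rho*q + 2*m*d0*d2 | _ => k*p*q + m*d1*d2 end) v = 0).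
{ intros v Hv. rewrite <- coef2. rewrite <- (Hvan v Hv). unfold cD, k, d0, d1, d2. rewrite Hal, Hbe. ring. }
pose proof (vanish v0 v1 H01 2 _ _ Hv2) as V.
destruct (V 0%nat ltac:(lia)) as [A0 _].
destruct (V 1%nat ltac:(lia)) as [A1 B1]. specialize (B1 ltac:(lia)).
destruct (V 2%nat ltac:(lia)) as [A2 B2]. specialize (B2 ltac:(lia)).
simpl in A0, A1, B1, A2, B2.
assert (HK1 : k + 4*m*rho^2 = 0).
{ assert (Ea : (k + 4*m*rho^2) * (p^2 - q^2) = 0) by (unfold d1, d2 in A2; nra).
  assert (Eb : (k + 4*m*rho^2) * (p * q) = 0) by (unfold d1, d2 in B2; nra).
  assert (Ec : (k + 4*m*rho^2)^2 * (p^2+q^2)^2 = 0).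
  { replace ((k + 4*m*rho^2)^2 * (p^2+q^2)^2) with (((k + 4*m*rho^2) * (p^2 - q^2))^2 + 4 * ((k + 4*m*rho^2) * (p * q))^2) by ring.
    rewrite Ea, Eb. ring. }
  apply Rmult_integral in Ec. destruct Ec as [Ec|Ec]. apply sq0; auto. apply sq0 in Ec. contradiction. }
assert (Hrho : rho * (k + 2*m*d0) = 0).
{ assert (Ea : (rho * (k + 2*m*d0)) * p = 0) by (unfold d1 in A1; nra).
  assert (Eb : (rho * (k + 2*m*d0)) * q = 0) by (unfold d2 in B1; nra).
  destruct (Req_dec p 0) as [Hp|Hp].
  - destruct (Req_dec q 0) as [Hq|Hq]. exfalso; apply Hpq; rewrite Hp, Hq; ring.
    apply Rmult_integral in Eb. destruct Eb; [auto|contradiction].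
  - apply Rmult_integral in Ea. destruct Ea; [auto|contradiction]. }
assert (Hd0 : m * (d0^2 - 4*rho^2*(1+rho^2)) = 0).
{ assert (Hk : k = -4*m*rho^2) by lra. rewrite Hk in A0. unfold d1, d2 in A0. rewrite <- A0. field. }
apply Rmult_integral in Hd0. destruct Hd0 as [Hd0|Hd0]; [contradiction|].
assert (Hr0 : rho = 0).
{ apply Rmult_integral in Hrho. destruct Hrho as [Hr|Hr]; auto.
  assert (Hd : d0 = 2 * rho^2).
  { apply (Rmult_eq_reg_l (2*m)); [|lra]. rewrite <- (Rplus_0_r (2*m*d0)). lra. } 
  rewrite Hd in Hd0. nra. }
assert (Hk : k = 0) by (rewrite Hr0 in HK1; lra).
assert (Hga : ga = 0).
{ unfold k in Hk. apply Rmult_integral in Hk. destruct Hk; [contradiction|auto]. }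
assert (Hd00 : d0 = 0) by (rewrite Hr0 in Hd0; apply sq0; lra).
assert (Hm' : v0 < (v0+v1)/2 < v1) by lra.
apply (Humb _ Hm'). unfold cD, cL. unfold d0 in Hd00. rewrite Hal, Hbe, Hga, Hr0. rewrite Hga, Hr0 in Hd00.
split; [transitivity (1 + p ^ 2 + q ^ 2 + 0 ^ 2 - R0 * 0); [ring | exact Hd00] | ring].
Qed.

End Core.


Lemma Dlin f g k u : ex_derive f u -> ex_derive g u ->
  Derive (fun t => f t + g t * k) u = Derive f u + Derive g u * k.
Proof. intros Hf Hg. apply is_derive_unique. auto_derive; auto. rewrite !Rmult_1_l. reflexivity. Qed.

Lemma loc_int u0 u1 u : u0 < u < u1 -> locally u (fun t => u0 < t < u1).
Proof. intro Hu. assert (Ho : open (fun t => u0 < t /\ t < u1)) by (apply open_and; [apply open_gt | apply open_lt]).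
apply Ho; auto. Qed.

Lemma cs_id L Rr k v : L - Rr = k * (sin v * sin v + cos v * cos v - 1) -> L = Rr.
Proof. intro H. pose proof (sin2_cos2 v) as E. unfold Rsqr in E. rewrite E in H. lra. Qed.

Section Geom.
Variables (a b r : R -> R) (u0 u1 u : R).
Hypothesis Ha : smooth_on a u0 u1.
Hypothesis Hb : smooth_on b u0 u1.
Hypothesis Hr : smooth_on r u0 u1.
Hypothesis Hu : u0 < u < u1.
Hypothesis HR0 : 0 < r u.

Let X := riemann_cyclic a b r.

Lemma ed1 f : smooth_on f u0 u1 -> forall x, u0 < x < u1 -> ex_derive f x.
Proof. intros H x Hx. exact (H 1%nat x Hx). Qed.
Lemma ed2 f : smooth_on f u0 u1 -> forall x, u0 < x < u1 -> ex_derive (Derive f) x.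
Proof. intros H x Hx. exact (H 2%nat x Hx). Qed.

Lemma Xu_val v : Xu X u v = (Derive a u + Derive r u * cos v, Derive b u + Derive r u * sin v, 1).
Proof. unfold Xu, X, riemann_cyclic, v1, v2, v3; simpl.
rewrite !Dlin by (apply ed1; auto). rewrite Derive_id. reflexivity. Qed.

Lemma Xv_val v : Xv X u v = (- r u * sin v, r u * cos v, 0).
Proof. unfold Xv, X, riemann_cyclic, v1, v2, v3; simpl.
f_equal; [f_equal|]; apply is_derive_unique; auto_derive; auto; ring. Qed.

Lemma Xuu_val v : Xu (Xu X) u v = (Derive_n a 2 u + Derive_n r 2 u * cos v, Derive_n b 2 u + Derive_n r 2 u * sin v, 0).
Proof. unfold Xu at 1. 
assert (E : forall f g k, smooth_on f u0 u1 -> smooth_on g u0 u1 ->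
   Derive (fun t => Derive (fun t0 => f t0 + g t0 * k) t) u = Derive_n f 2 u + Derive_n g 2 u * k).
{ intros f g k Hf Hg. rewrite (Derive_ext_loc _ (fun t => Derive f t + Derive g t * k)).
  - apply Dlin; apply ed2; auto.
  - eapply filter_imp; [|apply (loc_int u0 u1 u Hu)]. intros t Ht. apply Dlin; apply ed1; auto. }
unfold Xu, X, riemann_cyclic, v1, v2, v3; simpl.
rewrite !E by auto.
rewrite (Derive_ext _ (fun _ => 1)) by (intro; apply Derive_id). rewrite Derive_const. reflexivity. Qed.

Lemma Xuv_val v : Xv (Xu X) u v = (- Derive r u * sin v, Derive r u * cos v, 0).
Proof. unfold Xv at 1.
rewrite (Derive_ext (fun t => v1 (Xu X u t)) (fun t => Derive a u + Derive r u * cos t)) by (intro t; rewrite Xu_val; reflexivity).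
rewrite (Derive_ext (fun t => v2 (Xu X u t)) (fun t => Derive b u + Derive r u * sin t)) by (intro t; rewrite Xu_val; reflexivity).
rewrite (Derive_ext (fun t => v3 (Xu X u t)) (fun t => 1)) by (intro t; rewrite Xu_val; reflexivity).
rewrite Derive_const.
f_equal; try f_equal; apply is_derive_unique; auto_derive; auto; ring. Qed.

Lemma Xvv_val v : Xv (Xv X) u v = (- r u * cos v, - r u * sin v, 0).
Proof. unfold Xv at 1.
rewrite (Derive_ext (fun t => v1 (Xv X u t)) (fun t => - r u * sin t)) by (intro t; rewrite Xv_val; reflexivity).
rewrite (Derive_ext (fun t => v2 (Xv X u t)) (fun t => r u * cos t)) by (intro t; rewrite Xv_val; reflexivity).
rewrite (Derive_ext (fun t => v3 (Xv X u t)) (fun t => 0)) by (intro t; rewrite Xv_val; reflexivity).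
rewrite Derive_const.
f_equal; try f_equal; apply is_derive_unique; auto_derive; auto; ring. Qed.

Let p := Derive a u.
Let q := Derive b u.
Let rho := Derive r u.
Let al := Derive_n a 2 u.
Let be := Derive_n b 2 u.
Let ga := Derive_n r 2 u.
Let R0 := r u.

Lemma fE_val v : fE X u v = 1 + p^2 + q^2 + rho^2 + 2*rho*(p * cos v + q * sin v).
Proof. unfold fE. rewrite Xu_val. unfold dot, v1, v2, v3; simpl.
pose proof (sin2_cos2 v) as H. unfold Rsqr in H. fold p q rho. nsatz. Qed.

Lemma fF_val v : fF X u v = R0 * (q * cos v - p * sin v).
Proof. unfold fF. rewrite Xu_val, Xv_val. unfold dot, v1, v2, v3; simpl. fold p q rho R0. ring. Qed.

Lemma fG_val v : fG X u v = R0^2.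
Proof. unfold fG. rewrite Xv_val. unfold dot, v1, v2, v3; simpl.
pose proof (sin2_cos2 v) as H. unfold Rsqr in H. fold R0. nsatz. Qed.

Lemma fW2_val v : fW2 X u v = R0^2 * cT p q rho v.
Proof. unfold fW2. rewrite fE_val, fF_val, fG_val. unfold cT, cP.
apply (cs_id _ _ (-(p^2+q^2)*R0^2) v). ring. Qed.

Lemma l_val v : sqrt (dot (cross (Xu X u v) (Xv X u v)) (cross (Xu X u v) (Xv X u v))) = R0 * cw p q rho v.
Proof.
assert (Hw : 0 <= cw p q rho v) by (unfold cw; apply sqrt_pos).
rewrite <- (sqrt_pow2 (R0 * cw p q rho v)) by (unfold R0; apply Rmult_le_pos; lra).
f_equal. replace ((R0 * cw p q rho v)^2) with (R0^2 * cw p q rho v ^ 2) by ring. rewrite cw_sq.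
rewrite Xu_val, Xv_val. unfold dot, cross, v1, v2, v3; cbn [fst snd].
unfold cT, cP. fold p q rho R0.
apply (cs_id _ _ (R0^2 * (1 + 2*(p*cos v + q*sin v)*rho + rho^2*(sin v * sin v + cos v * cos v + 1))) v). ring. Qed.

Lemma cw_pos v : 0 < cw p q rho v.
Proof. unfold cw. apply sqrt_lt_R0. apply cT_pos. Qed.

Ltac prep_sf v := cbv zeta; rewrite l_val;
  rewrite ?Xuu_val, ?Xuv_val, ?Xvv_val, ?Xu_val, ?Xv_val; unfold dot, cross, v1, v2, v3; cbn [fst snd];
  fold p q rho al be ga R0; pose proof (cw_pos v); assert (0 < R0) by (unfold R0; lra).

Lemma se_val v : se X u v = - cL al be ga v / cw p q rho v.
Proof. unfold se, unit_normal. prep_sf v. unfold cL.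
apply (cs_id _ _ (- ga / cw p q rho v) v). field. lra. Qed.

Lemma sf_val v : sf X u v = 0.
Proof. unfold sf, unit_normal. prep_sf v. field. lra. Qed.

Lemma sg_val v : sg X u v = R0 / cw p q rho v.
Proof. unfold sg, unit_normal. prep_sf v.
apply (cs_id _ _ (R0 / cw p q rho v) v). field. lra. Qed.

Lemma H_val v : meanH X u v = cD R0 p q rho al be ga v / (2 * R0 * cw p q rho v * cT p q rho v).
Proof. unfold meanH. rewrite se_val, sf_val, sg_val, fE_val, fF_val, fG_val, fW2_val.
pose proof (cw_pos v). pose proof (cT_pos p q rho v). assert (0 < R0) by (unfold R0; lra).
unfold cD, cL. field. lra. Qed.

Lemma K_val v : gaussK X u v = - cL al be ga v / (R0 * cT p q rho v ^ 2).
Proof. unfold gaussK. rewrite se_val, sf_val, sg_val, fW2_val.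
pose proof (cw_pos v). pose proof (cT_pos p q rho v). assert (0 < R0) by (unfold R0; lra).
rewrite <- (cw_sq p q rho v). field. lra. Qed.

End Geom.

Section PW.
Variables (a b r : R -> R) (u0 u1 u v m n : R).
Hypothesis Ha : smooth_on a u0 u1.
Hypothesis Hb : smooth_on b u0 u1.
Hypothesis Hr : smooth_on r u0 u1.
Hypothesis Hu : u0 < u < u1.
Hypothesis HR0 : 0 < r u.
Let X := riemann_cyclic a b r.
Let p := Derive a u.
Let q := Derive b u.
Let rho := Derive r u.
Let al := Derive_n a 2 u.
Let be := Derive_n b 2 u.
Let ga := Derive_n r 2 u.
Let R0 := r u.

Lemma umb_pw : kappa_plus X u v <> kappa_minus X u v ->
  ~ (cD R0 p q rho al be ga v = 0 /\ cL al be ga v = 0).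
Proof. intros Hk [E1 E2]. apply Hk. unfold kappa_plus, kappa_minus.
assert (EH : meanH X u v = 0) by (unfold X; rewrite (H_val a b r u0 u1 u); auto; fold p q rho al be ga R0; rewrite E1; unfold Rdiv; ring).
assert (EK : gaussK X u v = 0) by (unfold X; rewrite (K_val a b r u0 u1 u); auto; fold p q rho al be ga R0; rewrite E2; unfold Rdiv; ring).
rewrite EH, EK. replace (0 ^ 2 - 0) with 0 by ring. rewrite sqrt_0. ring. Qed.

Lemma star_pw : kappa_plus X u v <> kappa_minus X u v ->
  (kappa_plus X u v = m * kappa_minus X u v + n \/ kappa_minus X u v = m * kappa_plus X u v + n) ->
  star R0 p q rho al be ga m n v = 0.
Proof. intros Hk Hl. unfold kappa_plus, kappa_minus in *.
set (H := meanH X u v) in *. set (K := gaussK X u v) in *.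
set (S := sqrt (H^2 - K)) in *.
assert (HS : S <> 0) by (intro E; apply Hk; rewrite E; ring).
assert (Hpos : 0 < H^2 - K).
{ destruct (Rlt_or_le 0 (H^2 - K)) as [h|h]; auto. exfalso. apply HS. unfold S. apply sqrt_neg_0; auto. }
assert (HS2 : S * S = H^2 - K) by (apply sqrt_sqrt; lra).
assert (Rel : (1+m)^2 * (H^2 - K) = (n - (1-m)*H)^2).
{ rewrite <- HS2. destruct Hl as [E|E].
  - assert (E' : (1+m)*S = n - (1-m)*H) by lra. rewrite <- E'. ring.
  - assert (E' : -(1+m)*S = n - (1-m)*H) by lra. rewrite <- E'. ring. }
assert (EH : H = cD R0 p q rho al be ga v / (2 * R0 * cw p q rho v * cT p q rho v))
  by (unfold H, X; rewrite (H_val a b r u0 u1 u); auto).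
assert (EK : K = - cL al be ga v / (R0 * cT p q rho v ^ 2))
  by (unfold K, X; rewrite (K_val a b r u0 u1 u); auto).
assert (Hw : 0 < cw p q rho v) by (unfold cw; apply sqrt_lt_R0; apply cT_pos).
assert (HR : 0 < R0) by (unfold R0; lra).
unfold star. rewrite <- (cw_sq p q rho v) in *.
set (w := cw p q rho v) in *. set (Dd := cD R0 p q rho al be ga v) in *. set (L := cL al be ga v) in *.
assert (E : m * Dd ^ 2 + (1 + m) ^ 2 * R0 * L * w ^ 2 + n * (1 - m) * R0 * Dd * w ^ 2 * w - n ^ 2 * R0 ^ 2 * (w ^ 2) ^ 3
   = R0^2 * (w^2)^3 * ((1+m)^2 * (H^2 - K) - (n - (1-m)*H)^2)).
{ rewrite EH, EK. field. lra. }
rewrite E, Rel. ring. Qed.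

End PW.

Lemma const_on (f : R -> R) u0 u1 : (forall x, u0 < x < u1 -> is_derive f x 0) ->
  forall x, u0 < x < u1 -> f x = f ((u0 + u1) / 2).
Proof. intros H x Hx.
assert (Hm : u0 < (u0+u1)/2 < u1) by lra.
assert (Hin : forall y, Rmin x ((u0+u1)/2) <= y <= Rmax x ((u0+u1)/2) -> u0 < y < u1).
{ intros y [Hy1 Hy2]. split.
  - eapply Rlt_le_trans; [|exact Hy1]. apply Rmin_glb_lt; lra.
  - eapply Rle_lt_trans; [exact Hy2|]. apply Rmax_lub_lt; lra. }
destruct (MVT_gen f x ((u0+u1)/2) (fun _ => 0)) as [c [Hc E]].
- intros y Hy. apply H. apply Hin. lra.
- intros y Hy. apply continuity_pt_filterlim. apply (ex_derive_continuous f y). exists 0. apply H. apply Hin; auto.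
- lra.
Qed.

Lemma lin_vanish v0 v1 d0 d1 d2 : v0 < v1 ->
  (forall v, v0 < v < v1 -> d0 + d1 * cos v + d2 * sin v = 0) -> d0 = 0 /\ d1 = 0 /\ d2 = 0.
Proof. intros H01 H.
destruct (vanish_top v0 v1 1 _ _ _ H01 (le_n 1) (trig1 d1 d2 d0) H) as [E1 E2].
assert (Hm : v0 < (v0+v1)/2 < v1) by lra. specialize (H _ Hm). rewrite E1, E2 in H.
repeat split; auto. lra. Qed.

Theorem theorem2 (a b r : R -> R) (u0 u1 v0 v1 : R) :
  u0 < u1 -> v0 < v1 ->
  smooth_on a u0 u1 -> smooth_on b u0 u1 -> smooth_on r u0 u1 ->
  (forall u, u0 < u < u1 -> 0 < r u) ->
  let D := fun u v => u0 < u < u1 /\ v0 < v < v1 in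
  umbilic_free (riemann_cyclic a b r) D ->
  is_LW (riemann_cyclic a b r) D ->
  (exists ca cb : R, forall u, u0 < u < u1 -> a u = ca /\ b u = cb)
  \/
  (exists lam mu : R, lam ^ 2 + mu ^ 2 <> 0 /\
     forall u, u0 < u < u1 ->
       Derive a u = lam * r u ^ 2 /\ Derive b u = mu * r u ^ 2 /\
       1 + (lam ^ 2 + mu ^ 2) * r u ^ 4 + Derive r u ^ 2
         - r u * Derive_n r 2 u = 0).
Proof.
intros H01 Hv01 Ha Hb Hr Hrpos D Humb [m [n [Hm0 Hlab]]].
assert (Hst : forall u v, u0 < u < u1 -> v0 < v < v1 ->
  star (r u) (Derive a u) (Derive b u) (Derive r u) (Derive_n a 2 u) (Derive_n b 2 u) (Derive_n r 2 u) m n v = 0).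
{ intros u v Hu Hv. apply (star_pw a b r u0 u1); auto.
  - apply Humb. split; auto.
  - destruct Hlab as [Hl|Hl]; [left|right]; apply Hl; split; auto. }
assert (Hum : forall u v, u0 < u < u1 -> v0 < v < v1 ->
  ~ (cD (r u) (Derive a u) (Derive b u) (Derive r u) (Derive_n a 2 u) (Derive_n b 2 u) (Derive_n r 2 u) v = 0
     /\ cL (Derive_n a 2 u) (Derive_n b 2 u) (Derive_n r 2 u) v = 0)).
{ intros u v Hu Hv. apply (umb_pw a b r u0 u1); auto. apply Humb. split; auto. }
assert (Hmid : u0 < (u0+u1)/2 < u1) by lra.
assert (Hconst : forall f, (forall x, u0 < x < u1 -> ex_derive f x /\ Derive f x = 0) ->
   forall x, u0 < x < u1 -> f x = f ((u0+u1)/2)).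
{ intros f Hf. apply const_on. intros x Hx. destruct (Hf x Hx) as [E1 E2].
  rewrite <- E2. apply Derive_correct; auto. }
destruct (classic (exists u, u0 < u < u1 /\ Derive a u ^ 2 + Derive b u ^ 2 <> 0)) as [[us [Hus Hpq]] | Hno].
- assert (Hn : n = 0).
  { apply (claimA (r us) (Derive a us) (Derive b us) (Derive r us) (Derive_n a 2 us) (Derive_n b 2 us) (Derive_n r 2 us) m n Hpq v0 v1 Hv01 (Hrpos us Hus)).
    intros v Hv; apply Hst; auto. }
  assert (Hm : m = -1).
  { apply (claimB (r us) (Derive a us) (Derive b us) (Derive r us) (Derive_n a 2 us) (Derive_n b 2 us) (Derive_n r 2 us) m n Hpq v0 v1 Hv01 (Hrpos us Hus)).
    all: try (intros v Hv; first [apply Hst; auto | apply Hum; auto]). auto. }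
  assert (HE : forall u, u0 < u < u1 ->
     1 + Derive a u ^ 2 + Derive b u ^ 2 + Derive r u ^ 2 - r u * Derive_n r 2 u = 0 /\
     2 * Derive r u * Derive a u - r u * Derive_n a 2 u = 0 /\
     2 * Derive r u * Derive b u - r u * Derive_n b 2 u = 0).
  { intros u Hu. apply (lin_vanish v0 v1); auto. intros v Hv.
    pose proof (Hst u v Hu Hv) as E.
    assert (E' : star (r u) (Derive a u) (Derive b u) (Derive r u) (Derive_n a 2 u) (Derive_n b 2 u) (Derive_n r 2 u) m n v
       = - (cD (r u) (Derive a u) (Derive b u) (Derive r u) (Derive_n a 2 u) (Derive_n b 2 u) (Derive_n r 2 u) v) ^ 2)
      by (unfold star; rewrite Hm, Hn; ring).
    rewrite E' in E.
    assert (E2 : cD (r u) (Derive a u) (Derive b u) (Derive r u) (Derive_n a 2 u) (Derive_n b 2 u) (Derive_n r 2 u) v ^ 2 = 0) by lra.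
    apply sq0 in E2. etransitivity; [|exact E2]. unfold cD. ring. }
  assert (Hg : forall f, smooth_on f u0 u1 ->
     (forall x, u0 < x < u1 -> 2 * Derive r x * Derive f x - r x * Derive_n f 2 x = 0) ->
     forall x, u0 < x < u1 -> Derive f x = (Derive f ((u0+u1)/2) / r ((u0+u1)/2) ^ 2) * r x ^ 2).
  { intros f Hf Hfe x Hx.
    assert (Hc : forall y, u0 < y < u1 -> is_derive (fun t => Derive f t / r t ^ 2) y 0).
    { intros y Hy. pose proof (Hrpos y Hy). pose proof (Hfe y Hy) as E.
      auto_derive.
      - split; [apply (ed2 u0 u1); auto|]. split; [apply (ed1 u0 u1); auto|]. split; auto.
        intro Hz; nra.
      - replace (Derive (fun x => Derive f x) y) with (Derive_n f 2 y) by reflexivity.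
        replace (Derive (fun x => r x) y) with (Derive r y) by reflexivity.
        replace (Derive_n f 2 y) with (2 * Derive r y * Derive f y / r y) by (field_simplify_eq; lra).
        field. lra. }
    pose proof (const_on _ _ _ Hc x Hx) as E. cbv beta in E. pose proof (Hrpos x Hx). pose proof (Hrpos _ Hmid).
    rewrite <- E. field. lra. }
  set (mid := (u0+u1)/2) in *.
  set (lam := Derive a mid / r mid ^ 2) in *. set (mu := Derive b mid / r mid ^ 2) in *.
  assert (HA : forall x, u0 < x < u1 -> Derive a x = lam * r x ^ 2).
  { apply Hg; auto. intros x Hx. apply (HE x Hx). }
  assert (HB : forall x, u0 < x < u1 -> Derive b x = mu * r x ^ 2).
  { apply Hg; auto. intros x Hx. apply (HE x Hx). }
  destruct (Req_dec (lam^2 + mu^2) 0) as [Hz|Hz].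
  + left. assert (Hl : lam = 0) by nra. assert (Hmu : mu = 0) by nra.
    exists (a mid), (b mid). intros x Hx. split; apply Hconst; auto; intros y Hy; split.
    * apply (ed1 u0 u1); auto.
    * rewrite HA, Hl by auto. ring.
    * apply (ed1 u0 u1); auto.
    * rewrite HB, Hmu by auto. ring.
  + right. exists lam, mu. split; auto. intros x Hx. split; [apply HA; auto|]. split; [apply HB; auto|].
    destruct (HE x Hx) as [E3 _]. etransitivity; [|exact E3]. rewrite (HA x Hx), (HB x Hx). ring.
- assert (H0 : forall x, u0 < x < u1 -> Derive a x = 0 /\ Derive b x = 0).
  { intros x Hx. assert (Hs : Derive a x ^ 2 + Derive b x ^ 2 = 0).
    { apply NNPP; intro Hne; apply Hno; exists x; auto. } split; nra. }
  left. exists (a ((u0+u1)/2)), (b ((u0+u1)/2)). intros x Hx. split; apply Hconst; auto; intros y Hy; split.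
  * apply (ed1 u0 u1); auto.
  * apply H0; auto.
  * apply (ed1 u0 u1); auto.
  * apply H0; auto.
Qed.
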